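(* If $G$ is a nontrivial graph of order $n$ having a vertex of degree $k$, then $\beta_p(G)\le n-\min\{k,n-1-k\}$.
   Context: All graphs are finite, simple, undirected and connected. For a partition $\Pi=\{S_1,\dots,S_m\}$ of $V(G)$, $r(u|\Pi)=(d(u,S_1),\dots,d(u,S_m))$ with $d(u,S)=\min_{w\in S}d(u,w)$; $\Pi$ is locating if $r(u|\Pi)\ne r(v|\Pi)$ for all distinct $u,v$; $\beta_p(G)$ is the minimum size of a locating partition. *)

(* Defs.v *)
From mathcomp Require Import all_boot.
Set Implicit Arguments. Unset Strict Implicit. Unset Printing Implicit Defensive.

Definition simple_graph (T : finType) (e : rel T) : Prop :=
  symmetric e /\ irreflexive e.

Definition connected_graph (T : finType) (e : rel T) : Prop :=
  forall u v : T, connect e u v.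

Fixpoint ball (T : finType) (e : rel T) (n : nat) (u : T) : {set T} :=
  match n with
  | 0 => [set u]
  | n'.+1 => ball e n' u :|: [set y | [exists x in ball e n' u, e x y]]
  end.

(* graph distance (correct for connected graphs: every distance is < #|T|) *)
Definition dist (T : finType) (e : rel T) (u v : T) : nat :=
  find (fun n => v \in ball e n u) (iota 0 #|T|).

Definition dist_set (T : finType) (e : rel T) (u : T) (S : {set T}) : nat :=
  \big[minn/#|T|]_(w in S) dist e u w.

Definition deg (T : finType) (e : rel T) (v : T) : nat := #|[set w | e v w]|.

Definition locating (T : finType) (e : rel T) (P : {set {set T}}) : bool :=
  partition P [set: T] &&
  [forall u : T, forall v : T,
     (u != v) ==> [exists S in P, dist_set e u S != dist_set e v S]].

Definition beta_p (T : finType) (e : rel T) : nat :=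
  \big[minn/#|T|]_(P : {set {set T}} | locating e P) #|P|.

(* Main.v *)
Require Import Defs.
From mathcomp Require Import all_boot.
Set Implicit Arguments. Unset Strict Implicit. Unset Printing Implicit Defensive.

Lemma bigmin_le (I : eqType) (m : nat) (P : pred I) (F : I -> nat) j (r : seq I) :
  j \in r -> P j -> \big[minn/m]_(i <- r | P i) F i <= F j.
Proof.
move=> + Pj; elim: r => [//|x r IH].
rewrite inE big_cons; case/orP=> [/eqP<-|jr]; first by rewrite Pj geq_minl.
by case: (P x); [rewrite geq_min IH // orbT | exact: IH].
Qed.

Lemma bigmin_le_fin (I : finType) (m : nat) (P : pred I) (F : I -> nat) j :
  P j -> \big[minn/m]_(i | P i) F i <= F j.
Proof. by move=> Pj; apply: bigmin_le => //; rewrite mem_index_enum. Qed.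

Section D.
Variables (T : finType) (e : rel T).
Hypothesis n2 : 2 <= #|T|.

Lemma iotaT : iota 0 #|T| = 0 :: 1 :: iota 2 (#|T| - 2).
Proof. by case: #|T| n2 => [|[|n]] //= _; rewrite subn2. Qed.

Lemma dist_refl u : dist e u u = 0.
Proof. by rewrite /dist iotaT /= inE eqxx. Qed.

Lemma dist_neq u w : u != w -> dist e u w != 0.
Proof. by move=> uw; rewrite /dist iotaT /= inE (eq_sym w) (negbTE uw). Qed.

Lemma dist_one x v : x != v -> e x v -> dist e x v = 1.
Proof.
move=> xv exv; rewrite /dist iotaT /= inE (eq_sym v) (negbTE xv).
rewrite ifT //; apply/setU1P; right; rewrite inE; apply/existsP; exists x; by rewrite inE eqxx.
Qed.

Lemma dist_not_one u v : u != v -> ~~ e u v -> dist e u v != 1.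
Proof.
move=> uv nuv; rewrite /dist iotaT /= inE (eq_sym v) (negbTE uv).
rewrite ifF //; apply/setU1P; case=> [/eqP|]; first by rewrite (eq_sym v) (negbTE uv).
rewrite inE => /existsP [x /andP [] ]; rewrite inE => /eqP -> ; by rewrite (negbTE nuv).
Qed.

Lemma dist_set_in (u : T) (S : {set T}) : u \in S -> dist_set e u S = 0.
Proof.
move=> uS; apply/eqP; rewrite -leqn0 -(dist_refl u); exact: bigmin_le_fin.
Qed.

Lemma dist_set_out (u : T) (S : {set T}) : u \notin S -> dist_set e u S != 0.
Proof.
move=> uS; rewrite -lt0n; apply: (big_ind (fun x => 0 < x)).
- by apply: leq_trans n2.
- by move=> a b a0 b0; rewrite leq_min a0 b0.
- move=> w wS; rewrite lt0n dist_neq //; apply: contraNneq uS => ->; exact: wS.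
Qed.

End D.

Section Main.
Variables (T : finType) (e : rel T) (v : T).
Hypothesis sg : simple_graph e.
Hypothesis n2 : 2 <= #|T|.

Definition N := [set w | e v w].
Definition M := [set w | (w != v) && ~~ e v w].
Definition m := minn #|N| #|M|.
Definition sN := enum N.
Definition sM := enum M.
Definition Y := (fun i : 'I_m => nth v sM i) @: [set: 'I_m].
Definition g w := if w \in Y then nth v sN (index w sM) else w.

Lemma Yspec w : w \in Y -> w \in M /\ index w sM < m.
Proof.
case/imsetP=> i _ ->.
have im : i < size sM by rewrite /sM -cardE (leq_trans (ltn_ord i)) // /m geq_minr.
split; first by rewrite -(mem_enum M) mem_nth.
by rewrite index_uniq ?enum_uniq.
Qed.

Lemma gY w : w \in Y -> g w \in N.
Proof.
move=> wY; rewrite /g wY; case: (Yspec wY) => _ im.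
by rewrite -(mem_enum N) mem_nth // /sN -cardE (leq_trans im) // /m geq_minl.
Qed.

Lemma NM x : x \in N -> x \notin M.
Proof. by rewrite !inE => ->; rewrite andbF. Qed.

Lemma gnotY w : g w \notin Y.
Proof.
case wY: (w \in Y).
  by apply/negP => /Yspec [] gM _; move: (NM (gY wY)); rewrite gM.
by rewrite /g wY wY.
Qed.

Lemma g_inj u w : u \in Y -> w \in Y -> g u = g w -> u = w.
Proof.
move=> uY wY; rewrite /g uY wY.
case: (Yspec uY) (Yspec wY) => uM um [wM wm].
have sz : m <= size sN by rewrite /sN -cardE /m geq_minl.
move/eqP; rewrite nth_uniq ?enum_uniq ?(leq_trans um) ?(leq_trans wm) // => /eqP h.
have uS : u \in sM by rewrite mem_enum.
have wS : w \in sM by rewrite mem_enum.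
by rewrite -(nth_index v uS) h nth_index.
Qed.

Lemma vnotY : v \notin Y.
Proof. by apply/negP => /Yspec [] ; rewrite inE eqxx. Qed.

Lemma g_out w : w \notin Y -> g w = w.
Proof. by rewrite /g => /negbTE ->. Qed.

Lemma vnotN : v \notin N.
Proof. by rewrite inE (proj2 sg). Qed.

Lemma blk_v y : (g v == g y) = (y == v).
Proof.
rewrite (g_out vnotY); case yY: (y \in Y).
  have := gY yY; have [yM _] := Yspec yY; move: yM; rewrite !inE => /andP [yv _].
  rewrite (negbTE yv) => gyN; apply/negbTE/eqP => vg; move: (proj2 sg v); by rewrite {2}vg gyN.
by rewrite (g_out (negbT yY)) eq_sym.
Qed.

Lemma cardY : #|Y| = m.
Proof.
rewrite card_imset ?cardsT ?card_ord // => i j /eqP.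
have sz : m <= size sM by rewrite /sM -cardE /m geq_minr.
rewrite nth_uniq ?enum_uniq ?(leq_trans (ltn_ord i)) ?(leq_trans (ltn_ord j)) //.
by move=> /eqP h; apply: val_inj.
Qed.

Lemma imgY : g @: [set: T] = ~: Y.
Proof.
apply/setP => x; rewrite inE; apply/imsetP/idP.
  by case=> y _ ->; exact: gnotY.
by move=> xY; exists x; rewrite ?inE // g_out.
Qed.

Lemma cardP : #|preim_partition g [set: T]| = #|T| - m.
Proof.
have -> : preim_partition g [set: T] =
   (fun z => [set y in [set: T] | z == g y]) @: (g @: [set: T]).
  by rewrite /preim_partition /equivalence_partition -imset_comp.
rewrite card_in_imset; last first.
  move=> z1 z2 /imsetP [x1 _ ->] _ /setP /(_ x1); rewrite !inE eqxx /= => /esym/eqP ->//.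
by rewrite imgY -cardY -(cardsC Y) addKn.
Qed.

Lemma locP : locating e (preim_partition g [set: T]).
Proof.
rewrite /locating preim_partitionP /=.
have blkP x : [set y in [set: T] | g x == g y] \in preim_partition g [set: T].
  by apply: imset_f; rewrite inE.
apply/forallP => u; apply/forallP => w; apply/implyP => uw.
case: (eqVneq (g u) (g w)) => [guw|nguw]; last first.
  apply/existsP; exists [set y in [set: T] | g u == g y]; rewrite blkP /=.
  by rewrite dist_set_in ?inE ?eqxx // eq_sym dist_set_out // !inE /= nguw.
set S := [set y in [set: T] | g v == g y].
have Sv y : (y \in S) = (y == v) by rewrite !inE /= blk_v.
have key a b : a \in Y -> b \notin Y -> g a = g b ->
    dist_set e a S != dist_set e b S.
  move=> aY bY gab.
  have bN : b \in N by rewrite -(g_out bY) -gab gY.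
  have ebv : e b v by rewrite (proj1 sg) -(in_set (fun w => e v w)).
  have bv : b != v by apply: contraNneq vnotN => <-.
  have [aM _] := Yspec aY; move: aM; rewrite inE => /andP [av nav].
  have nav' : ~~ e a v by rewrite (proj1 sg).
  have d1 : dist_set e b S = 1.
    apply/eqP; rewrite eqn_leq; apply/andP; split.
      rewrite -(dist_one n2 bv ebv); apply: bigmin_le_fin; by rewrite Sv.
    by rewrite lt0n dist_set_out // Sv.
  rewrite d1; apply: (big_ind (fun x => x != 1)).
  - by case: #|T| n2 => [|[]].
  - by move=> x y x1 y1; rewrite /minn; case: ifP.
  - by move=> y; rewrite Sv => /eqP ->; exact: dist_not_one.
apply/existsP; exists S; rewrite blkP /=.
case uY: (u \in Y); case wY: (w \in Y).
- by move: uw; rewrite (g_inj uY wY guw) eqxx.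
- by apply: key => //; rewrite wY.
- by rewrite eq_sym; apply: key => //; rewrite uY.
- by move: uw; rewrite -(g_out (negbT uY)) -(g_out (negbT wY)) guw eqxx.
Qed.

Lemma cardM : #|M| = #|T| - 1 - deg e v.
Proof.
have -> : M = ~: (v |: N) by apply/setP => x; rewrite !inE negb_or.
by rewrite -(cardsC (v |: N)) cardsU1 vnotN /deg -/N add1n addSn subn1 /= addKn.
Qed.

Lemma main_bound : beta_p e <= #|T| - minn (deg e v) (#|T| - 1 - deg e v).
Proof.
rewrite -cardM -/N /deg -/N.
have -> : minn #|N| #|M| = m by [].
rewrite -cardP; apply: bigmin_le_fin; exact: locP.
Qed.

End Main.

Theorem lemma10 (T : finType) (e : rel T) (v : T) (k : nat) :
  simple_graph e -> connected_graph e -> 2 <= #|T| -> deg e v = k ->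
  beta_p e <= #|T| - minn k (#|T| - 1 - k).
Proof. by move=> sg _ n2 <-; apply: main_bound. Qed.
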